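(* With $f$ as in the context (and $n\ge 3$), $U=\{x\in V : xf\in v_0\wedge V\}$, and every $g\in G$ satisfies $Ug=U$.
   Context: Let $p$ be a prime, $\mathbb{F}=\mathrm{GF}(p)$, and $n\ge 3$. Let $V$ be an $\mathbb{F}$-vector space with basis $v_0,\dots,v_n$, $U=\langle v_1,\dots,v_n\rangle$, $W=\Lambda^2V$, and $v_0\wedge V=\{v_0\wedge y:y\in V\}$. Maps are written on the right. For $g\in\mathrm{End}(V)$, $\widehat g$ denotes the induced linear map of $W$, $(x\wedge y)\widehat g=(xg)\wedge(yg)$. The linear map $f:V\to W$ is given by $v_0f=\sum_{i=1}^n b_i\, v_0\wedge v_i+\sum_{1\le j<k\le n}c_{j,k}\, v_j\wedge v_k$ and $v_if=\sum_{j=1}^n A_{i,j}\, v_0\wedge v_j$ for $1\le i\le n$, where $b\in\mathbb{F}^n$ and $c=(c_{j,k})\in\mathbb{F}^{\binom n2}$ are nonzero, and $A$ is the $n\times n$ companion matrix of the minimal polynomial over $\mathbb{F}$ of a primitive element of $\mathrm{GF}(p^n)$. Let $G=\{g\in \mathrm{GL}(V) : (vg)f=(vf)\widehat{g}\ \text{for all } v\in V\}$. *)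

(* Defs.v *)
From HB Require Import structures.
From mathcomp Require Import all_boot all_order all_algebra all_fingroup all_field.
Set Implicit Arguments. Unset Strict Implicit. Unset Printing Implicit Defensive.
Import GRing.Theory.
Local Open Scope ring_scope.

(* V = F^(n+1) as row vectors 'rV_(n.+1); basis vector v_i = ebas i.
   v_0 is index ord0, v_i (1 <= i <= n) is index lift ord0 (i-1).
   W = Lambda^2 V is modelled by the space of alternating (n+1)x(n+1)
   matrices, via  x /\ y  :=  x^T y - y^T x  (standard isomorphism). *)

Definition ebas {F : fieldType} {m : nat} (i : 'I_m) : 'rV[F]_m := delta_mx 0 i.

Definition wedge {F : fieldType} {m : nat} (x y : 'rV[F]_m) : 'M[F]_m :=
  x^T *m y - y^T *m x.

(* induced map  g^ : W -> W,  (x /\ y) g^ = (xg) /\ (yg) *)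
Definition hat {F : fieldType} {m : nat} (g : 'M[F]_m) (w : 'M[F]_m) : 'M[F]_m :=
  g^T *m w *m g.

Definition fbasis {F : fieldType} {n : nat} (b : 'rV[F]_n) (c A : 'M[F]_n)
  (i : 'I_n.+1) : 'M[F]_n.+1 :=
  match unlift ord0 i with
  | None =>
      \sum_(j < n) b 0 j *: wedge (ebas ord0) (ebas (lift ord0 j))
    + \sum_(j < n) \sum_(k < n | (j < k)%N)
          c j k *: wedge (ebas (lift ord0 j)) (ebas (lift ord0 k))
  | Some i' => \sum_(j < n) A i' j *: wedge (ebas ord0) (ebas (lift ord0 j))
  end.

Definition fmap {F : fieldType} {n : nat} (b : 'rV[F]_n) (c A : 'M[F]_n)
  (x : 'rV[F]_n.+1) : 'M[F]_n.+1 :=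
  \sum_(i < n.+1) x 0 i *: fbasis b c A i.

Definition inU {F : fieldType} {n : nat} (x : 'rV[F]_n.+1) : Prop :=
  (x <= \matrix_(i < n) ebas (lift ord0 i))%MS.

Definition in_v0V {F : fieldType} {n : nat} (w : 'M[F]_n.+1) : Prop :=
  exists y : 'rV[F]_n.+1, w = wedge (ebas ord0) y.

Definition inG {F : fieldType} {n : nat} (b : 'rV[F]_n) (c A : 'M[F]_n)
  (g : 'M[F]_n.+1) : Prop :=
  g \in unitmx /\
  forall v : 'rV[F]_n.+1, fmap b c A (v *m g) = hat g (fmap b c A v).

(* Main.v *)
Require Import Defs.
From HB Require Import structures.
From mathcomp Require Import all_boot all_order all_algebra all_fingroup all_field.
From mathcomp Require Import zify ring.
Set Implicit Arguments. Unset Strict Implicit. Unset Printing Implicit Defensive.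
Import GRing.Theory.
Local Open Scope ring_scope.

Section Gen.
Variable F : fieldType.

Lemma wedgeE m (x y : 'rV[F]_m) r s : wedge x y r s = x 0 r * y 0 s - y 0 r * x 0 s.
Proof. by rewrite /wedge !mxE !big_ord1 !mxE. Qed.

Lemma ebasE m (i j : 'I_m) : (ebas i : 'rV[F]_m) 0 j = (i == j)%:R.
Proof. by rewrite /ebas mxE eqxx eq_sym. Qed.

Lemma hat_wedge m (g : 'M[F]_m) x y : hat g (wedge x y) = wedge (x *m g) (y *m g).
Proof. by rewrite /hat /wedge mulmxBr mulmxBl !trmx_mul !mulmxA. Qed.

Lemma sum_delta m (G : 'I_m -> F) k : \sum_(j < m) G j * (j == k)%:R = G k.
Proof.
rewrite (bigD1 k) //= eqxx mulr1 big1 ?addr0 // => j /negbTE ->; by rewrite mulr0.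
Qed.

Lemma sum_delta' m (G : 'I_m -> F) k : \sum_(j < m) G j * (k == j)%:R = G k.
Proof. by under eq_bigr do rewrite eq_sym; apply: sum_delta. Qed.

Lemma lift0_neq m (h : 'I_m) j : (lift h j == h) = false.
Proof. by rewrite eq_sym; apply/negbTE/neq_lift. Qed.
Lemma lift0_neq' m (h : 'I_m) j : (h == lift h j) = false.
Proof. by apply/negbTE/neq_lift. Qed.
Lemma lift0_eq m (h : 'I_m) j k : (lift h j == lift h k) = (j == k).
Proof. exact: (inj_eq (@lift_inj _ h)). Qed.

Lemma nR0 m (h : 'I_m) j : (lift h j == h)%:R = 0 :> F.
Proof. by rewrite lift0_neq. Qed.
Lemma nR0' m (h : 'I_m) j : (h == lift h j)%:R = 0 :> F.
Proof. by rewrite lift0_neq'. Qed.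
Lemma nRl m (h : 'I_m) j k : (lift h j == lift h k)%:R = (j == k)%:R :> F.
Proof. by rewrite lift0_eq. Qed.
Lemma nR1 (T : eqType) (x : T) : (x == x)%:R = 1 :> F.
Proof. by rewrite eqxx. Qed.

Lemma matBZE m1 m2 (M N : 'M[F]_(m1, m2)) k i j : (M - k *: N) i j = M i j - k * N i j.
Proof. by rewrite !mxE. Qed.
Lemma matZE m1 m2 (M : 'M[F]_(m1, m2)) k i j : (k *: M) i j = k * M i j.
Proof. by rewrite !mxE. Qed.

Definition emb n (v : 'rV[F]_n) : 'rV[F]_n.+1 :=
  \row_i (match unlift ord0 i with Some i' => v 0 i' | None => 0 end).
Definition drp n (x : 'rV[F]_n.+1) : 'rV[F]_n := \row_j x 0 (lift ord0 j).

Lemma emb0 n (v : 'rV[F]_n) : emb v 0 ord0 = 0.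
Proof. by rewrite mxE unlift_none. Qed.
Lemma embl n (v : 'rV[F]_n) j : emb v 0 (lift ord0 j) = v 0 j.
Proof. by rewrite mxE liftK. Qed.
Lemma drp_emb n (v : 'rV[F]_n) : drp (emb v) = v.
Proof. by apply/rowP => j; rewrite mxE embl. Qed.

Lemma inU_iff n (x : 'rV[F]_n.+1) : inU x <-> x 0 ord0 = 0.
Proof.
rewrite /inU; split.
  move/submxP => [D ->]; rewrite mxE big1 // => i _.
  by rewrite !mxE eqxx lift0_neq' mulr0.
move=> h; apply/submxP; exists (drp x); apply/rowP => s; rewrite mxE.
case: (unliftP ord0 s) => [s'|] ->.
  under eq_bigr do rewrite !mxE eqxx lift0_eq.
  by rewrite sum_delta'.
by rewrite h big1 // => i _; rewrite !mxE eqxx lift0_neq' mulr0.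
Qed.


Section F.
Variables (n : nat) (b : 'rV[F]_n) (c A : 'M[F]_n).
Local Notation e0 := (ebas (ord0 : 'I_n.+1) : 'rV[F]_n.+1).

Lemma fmap_entry (x : 'rV[F]_n.+1) r s : fmap b c A x r s =
  x 0 ord0 * fbasis b c A ord0 r s +
  \sum_i x 0 (lift ord0 i) * fbasis b c A (lift ord0 i) r s.
Proof. by rewrite /fmap summxE big_ord_recl !mxE; under eq_bigr do rewrite mxE. Qed.

Lemma fbasis_lift i r s : fbasis b c A (lift ord0 i) r s =
  \sum_j A i j * ((ord0 == r)%:R * (lift ord0 j == s)%:R
                    - (lift ord0 j == r)%:R * (ord0 == s)%:R).
Proof.
rewrite /fbasis liftK summxE; apply: eq_bigr => j _.
by rewrite mxE wedgeE !ebasE.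
Qed.

Lemma fbasis_ll (i j k : 'I_n) : fbasis b c A (lift ord0 i) (lift ord0 j) (lift ord0 k) = 0.
Proof.
by rewrite fbasis_lift big1 // => l _; rewrite !nR0' !(mul0r, mulr0, subrr).
Qed.

Lemma fmapF2 (x : 'rV[F]_n.+1) : x 0 ord0 = 0 -> fmap b c A x = wedge e0 (emb (drp x *m A)).
Proof.
move=> h; apply/matrixP => r s; rewrite fmap_entry h mul0r add0r wedgeE !ebasE.
under eq_bigr do rewrite fbasis_lift.
case: (unliftP ord0 r) => [r'|] ->; case: (unliftP ord0 s) => [s'|] ->.
- rewrite !nR0' !(mul0r, mulr0, subrr) big1 // => i _.
  by rewrite big1 ?mulr0 // => l _; rewrite ?nR0' !(mul0r, mulr0, subrr).
- rewrite !nR0' nR1 !(mul0r, mulr0, mulr1, mul1r, sub0r, subr0) embl !mxE.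
  rewrite -sumrN; apply: eq_bigr => i _; rewrite !mxE.
  under eq_bigr do rewrite nRl mulr1 sub0r mulrN.
  by rewrite sumrN sum_delta mulrN.
- rewrite !nR0' nR1 !(mul0r, mulr0, mulr1, mul1r, sub0r, subr0) embl !mxE.
  apply: eq_bigr => i _; rewrite !mxE.
  under eq_bigr do rewrite nRl mul1r subr0.
  by rewrite sum_delta.
- rewrite (emb0 (drp x *m A)) [RHS](_ : _ = 0); last by rewrite mulr0 mul0r subrr.
  rewrite big1 // => i _.
  by rewrite big1 ?mulr0 // => l _; rewrite ?nR0 ?nR1 !(mul0r, mulr0, mulr1, mul1r, subrr).
Qed.


Lemma fmap_ll (x : 'rV[F]_n.+1) j k :
  fmap b c A x (lift ord0 j) (lift ord0 k) = x 0 ord0 * fbasis b c A ord0 (lift ord0 j) (lift ord0 k).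
Proof. by rewrite fmap_entry big1 ?addr0 // => i _; rewrite fbasis_ll mulr0. Qed.

Lemma fbasis0_ll (j0 k0 : 'I_n) : (j0 < k0)%N ->
  fbasis b c A ord0 (lift ord0 j0) (lift ord0 k0) = c j0 k0.
Proof.
move=> hjk.
have ne1 : (j0 == k0) = false by rewrite -val_eqE ltn_eqF.
have ne2 : (k0 == j0) = false by rewrite eq_sym ne1.
rewrite /fbasis unlift_none mxE !summxE.
rewrite [X in X + _]big1 ?add0r; last first.
  by move=> j _; rewrite mxE wedgeE !ebasE !nR0' mul0r mulr0 subrr mulr0.
have inner : forall j : 'I_n,
  (\sum_(k < n | (j < k)%N) c j k *: wedge (ebas (lift ord0 j)) (ebas (lift ord0 k)))
    (lift ord0 j0) (lift ord0 k0) = c j0 k0 * (j == j0)%:R :> F.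
  move=> j; rewrite summxE.
  have [->|hj] := eqVneq j j0.
    rewrite (bigD1 k0) //= big1 ?addr0.
      by rewrite mxE wedgeE !ebasE !nRl !eqxx ne1 ne2 mulr0 subr0 !mulr1.
    move=> k /andP[_ hk]; rewrite mxE wedgeE !ebasE !nRl (negbTE hk).
    by rewrite mulr0 ne1 mulr0 subrr mulr0.
  rewrite mulr0 big1 // => k hk; rewrite mxE wedgeE !ebasE !nRl.
  rewrite (negbTE hj) mul0r sub0r.
  have [ekj|nkj] := eqVneq k j0; have [ejk|njk] := eqVneq j k0;
    rewrite ?mul0r ?mulr0 ?oppr0 ?mulr0 //.
  by move: hk; rewrite ekj ejk ltnNge ltnW.
under eq_bigr do rewrite inner.
by rewrite (sum_delta (fun _ => c j0 k0)).
Qed.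


Hypothesis hcu : forall j k : 'I_n, ~~ (j < k)%N -> c j k = 0.
Hypothesis hc : c != 0.

Lemma part1 (x : 'rV[F]_n.+1) : inU x <-> in_v0V (fmap b c A x).
Proof.
rewrite inU_iff; split => [h|[y hy]].
  by exists (emb (drp x *m A)); rewrite fmapF2.
have [j0 [k0 hjk]] : exists j0 k0, c j0 k0 != 0.
  case: (pickP (fun jk : 'I_n * 'I_n => c jk.1 jk.2 != 0)) => [[j0 k0] /= h|h].
    by exists j0, k0.
  move/eqP: hc; case; apply/matrixP => j k; move: (h (j, k)) => /= /negbFE /eqP ->.
  by rewrite mxE.
have hlt : (j0 < k0)%N.
  by case: ltnP => // h'; move: hjk; rewrite hcu ?eqxx // -leqNgt.
have := congr1 (fun M : 'M[F]_n.+1 => M (lift ord0 j0) (lift ord0 k0)) hy => /=.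
rewrite fmap_ll fbasis0_ll // wedgeE !ebasE !nR0' mul0r mulr0 subrr => /eqP.
by rewrite mulf_eq0 (negbTE hjk) orbF => /eqP.
Qed.

Lemma wedgeZl k (x y : 'rV[F]_n.+1) : wedge (k *: x) y = wedge x (k *: y).
Proof. by apply/matrixP => r s; rewrite !wedgeE !mxE; ring. Qed.

Lemma Ginv g : inG b c A g -> inG b c A (invmx g).
Proof.
move=> [gu Hg]; split; first by rewrite unitmx_inv.
move=> v; move: (Hg (v *m invmx g)); rewrite mulmxKV // => ->.
rewrite /hat !mulmxA -trmx_mul mulmxV // trmx1 mul1mx -mulmxA mulmxV //.
by rewrite mulmx1.
Qed.

Hypothesis hAu : A \in unitmx.
Hypothesis hn : (3 <= n)%N.

Lemma Usub g : inG b c A g -> forall u : 'rV[F]_n.+1, u 0 ord0 = 0 -> (u *m g) 0 ord0 = 0.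
Proof.
move=> [gu Hg].
have stepA : forall k, g ord0 (lift ord0 k) = 0.
  move=> k0; apply/eqP/negPn/negP => hw.
  pose w := (ebas ord0 : 'rV[F]_n.+1) *m g.
  have wE s : w 0 s = g ord0 s by rewrite /w -rowE mxE.
  pose gam : 'cV[F]_n := \col_j g (lift ord0 j) ord0.
  pose hrow : 'rV[F]_n := \row_j (invmx g) ord0 (lift ord0 j).
  have claim : forall v : 'rV[F]_n, v *m gam = 0 -> (v *m A <= hrow)%MS.
    move=> v hv; pose u := emb v.
    have u0 : u 0 ord0 = 0 by rewrite /u emb0.
    have ug0 : (u *m g) 0 ord0 = 0.
      rewrite mxE big_ord_recl emb0 mul0r add0r.
      transitivity ((v *m gam) 0 0); last by rewrite hv mxE.
      by rewrite mxE; apply: eq_bigr => i _; rewrite /u embl mxE.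
    pose a := emb (drp u *m A).
    pose t := a *m g.
    have e1 : fmap b c A (u *m g) = wedge w t by rewrite Hg (fmapF2 u0) hat_wedge.
    have ht j : t 0 (lift ord0 j) * w 0 (lift ord0 k0) = w 0 (lift ord0 j) * t 0 (lift ord0 k0).
      have := fmap_ll (u *m g) j k0; rewrite ug0 mul0r e1 wedgeE => /eqP.
      by rewrite subr_eq0 => /eqP ->.
    pose lam := t 0 (lift ord0 k0) / w 0 (lift ord0 k0).
    have hw' : w 0 (lift ord0 k0) != 0 by rewrite wE.
    have htl j : t 0 (lift ord0 j) = lam * w 0 (lift ord0 j).
      by rewrite /lam mulrAC [t 0 (lift ord0 k0) * _]mulrC -ht mulfK.
    pose d := a - lam *: ebas ord0.
    have dg : d *m g = (d *m g) 0 ord0 *: ebas ord0.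
      apply/rowP => s; rewrite [RHS]mxE ebasE.
      case: (unliftP ord0 s) => [s'|] ->; last by rewrite nR1 mulr1.
      rewrite nR0' mulr0 /d mulmxBl -scalemxAl -/w -/t.
      by rewrite matBZE htl subrr.
    have dE : d = (d *m g) 0 ord0 *: (ebas ord0 *m invmx g).
      by rewrite scalemxAl -dg mulmxK.
    apply/submxP; exists ((d *m g) 0 ord0)%:M; rewrite mul_scalar_mx.
    apply/rowP => j.
    have := congr1 (fun M : 'rV[F]_n.+1 => M 0 (lift ord0 j)) dE => /=.
    rewrite /d matBZE ebasE nR0' mulr0 subr0 /a embl drp_emb matZE -rowE => ->.
    by rewrite matZE; congr (_ * _); rewrite !mxE.
  have sub : (kermx gam *m A <= hrow)%MS.
    apply/row_subP => i; rewrite row_mul; apply: claim.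
    by rewrite -row_mul mulmx_ker row0.
  have := mxrankS sub; rewrite mxrankMfree ?row_free_unit // mxrank_ker.
  have := rank_leq_row hrow; have := rank_leq_col gam.
  move: hn; clear; lia.
have wE' : (ebas ord0 : 'rV[F]_n.+1) *m g = g ord0 ord0 *: ebas ord0.
  apply/rowP => s; rewrite -rowE matZE ebasE [LHS]mxE.
  case: (unliftP ord0 s) => [s'|] ->; first by rewrite stepA nR0' mulr0.
  by rewrite nR1 mulr1.
move=> u u0.
have : in_v0V (fmap b c A (u *m g)).
  exists (g ord0 ord0 *: (emb (drp u *m A) *m g)).
  by rewrite Hg (fmapF2 u0) hat_wedge wE' wedgeZl.
by move/part1/inU_iff.
Qed.

End F.
End Gen.
Lemma A_unit (p n : nat) (L : fieldExtType 'F_p) (z : L) (q : {poly 'F_p})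
  (hq : map_poly (in_alg L) q = minPoly 1%VS z) (hn : (3 <= n)%N) (A : 'M['F_p]_n)
  (hA : exists e : (size q).-1 = n, A = castmx (e, e) (companionmx q)) :
  A \in unitmx.
Proof.
have szq : size q = size (minPoly 1%VS z) by rewrite -hq size_map_poly.
have monq : q \is monic by rewrite -(map_monic (in_alg L)) hq monic_minPoly.
have hsz : (3 < size q)%N by case: hA => e _; move: hn; rewrite -e; lia.
have q0 : q`_0 != 0.
  apply/negP => /eqP h0.
  have eqq : q = drop_poly 1 q * 'X.
    rewrite -[LHS](poly_take_drop 1) expr1 addrC.
    rewrite [take_poly 1 q](_ : _ = 0) ?addr0 //.
    apply/polyP => i; rewrite coef_take_poly coef0; case: i => [|i] //=.
  set r := drop_poly 1 q in eqq.
  have rz : (map_poly (in_alg L) r).[z] * z = 0.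
    by have := minPolyxx 1%VS z; rewrite -hq {1}eqq rmorphM /= map_polyX hornerMX.
  move/eqP: rz; rewrite mulf_eq0 => /orP [/eqP hr | /eqP hz].
    have hr0 : map_poly (in_alg L) r != 0.
      rewrite map_poly_eq0; apply: contraTneq hsz => r0.
      by rewrite eqq r0 mul0r size_poly0.
    have dv : minPoly 1%VS z %| map_poly (in_alg L) r.
      by apply: minPoly_dvdp; [apply/polyOver1P; exists r | apply/rootP].
    have := dvdp_leq hr0 dv; rewrite size_map_poly -szq.
    have : size q = (size r).+1.
      have rn0 : r != 0 by apply: contraNneq hr0 => ->; rewrite rmorph0.
      by rewrite eqq size_mulX.
    by move=> ->; rewrite ltnn.
  have dv : minPoly 1%VS z %| 'X.
    apply: minPoly_dvdp; first exact: polyOverX.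
    by rewrite rootE hornerX hz.
  have := dvdp_leq (negbT (polyX_eq0 _)) dv; rewrite size_polyX -szq; move: hsz; clear; lia.
case: hA => e ->; clear A hn; case: n / e.
rewrite castmx_id unitmxE unitfE.
apply: contra q0 => /eqP hd.
by rewrite -(companionmxK monq) char_poly_det hd mulr0.
Qed.

Unset Implicit Arguments.

Theorem lemma3p2 (p n : nat) (hp : prime p) (hn : (3 <= n)%N)
  (L : fieldExtType 'F_p) (hdim : \dim {:L} = n)
  (z : L) (hprim : forall y : L, y != 0 -> exists k : nat, y = z ^+ k)
  (q : {poly 'F_p}) (hq : map_poly (in_alg L) q = minPoly 1%VS z)
  (A : 'M['F_p]_n)
  (hA : exists e : (size q).-1 = n, A = castmx (e, e) (companionmx q))
  (b : 'rV['F_p]_n) (hb : b != 0)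
  (c : 'M['F_p]_n) (hc_upper : forall j k : 'I_n, ~~ (j < k)%N -> c j k = 0)
  (hc : c != 0) :
  (forall x : 'rV['F_p]_n.+1, inU x <-> in_v0V (fmap b c A x)) /\
  (forall g : 'M['F_p]_n.+1, inG b c A g ->
     forall y : 'rV['F_p]_n.+1, inU y <-> exists2 x, inU x & y = x *m g).
Proof.
have hAu := A_unit hq hn hA.
split.
  by move=> x; apply: part1.
move=> g hg y; split.
  move=> /inU_iff hy; exists (y *m invmx g); last by rewrite mulmxKV //; case: hg.
  apply/inU_iff; apply: (Usub hc_upper hc hAu hn (Ginv hg)) => //.
case=> x /inU_iff hx ->; apply/inU_iff; exact: (Usub hc_upper hc hAu hn hg).
Qed.
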